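(* Let $f_1,\dots,f_r\in\mathbb{R}[x]$ and $g_1,\dots,g_t\in\mathbb{R}[y]$ be real polynomials in $x\in\mathbb{R}^n$ and $y\in\mathbb{R}^m$, let $A\in\mathbb{R}^{m\times n}$, and set $h_j(x):=g_j(Ax)$. Let $C=\{x\in\mathbb{R}^n: f_i(x)\ge 0,\ i=1,\dots,r\}$, $H=\{x\in\mathbb{R}^n: h_j(x)\ge 0,\ j=1,\dots,t\}$, $d:=\max_{i,j}\{\lceil \deg(f_i)/2\rceil,\lceil\deg(h_j)/2\rceil\}$, and for $k\ge d$ $$S_k:=\Big\{x\in\mathbb{R}^n:\ \exists\, y\in\mathbb{R}^{\mathbb{N}^n_{2k}} \text{ with } y_0=1,\ x=(y_{e_1},\dots,y_{e_n}),\ L^{(k)}_{f_i}[y]\succeq 0\ (i=0,1,\dots,r),\ L^{(k)}_{h_j}[y]\succeq 0\ (j=1,\dots,t)\Big\},$$ where $f_0:=1$. Assume that all the polynomials $f_1,\dots,f_r,h_1,\dots,h_t$ (as polynomials in $x$) are sos-concave. Then $S_k=C\cap H$ for all $k\ge d$.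
   Context: $\mathbb{N}^n_{k}=\{\alpha\in\mathbb{N}^n: |\alpha|\le k\}$, and $\mathbb{R}^{\mathbb{N}^n_{2k}}$ is the space of real vectors $y=(y_\alpha)_{\alpha\in\mathbb{N}^n_{2k}}$. $[x]_s$ is the column vector of all monomials $x^\alpha$ with $|\alpha|\le s$. $e_i$ is the $i$-th unit vector and $0$ the zero multi-index. Localizing matrix: for a polynomial $f$ with $\deg f\le 2k$, let $s=k-\lceil\deg(f)/2\rceil$ and expand $f(x)[x]_s[x]_s^T=\sum_{\alpha\in\mathbb{N}^n_{2k}}x^\alpha F_\alpha$ with symmetric matrices $F_\alpha$; then $L^{(k)}_f[y]:=\sum_\alpha y_\alpha F_\alpha$. A polynomial $f\in\mathbb{R}[x]$ is sos-convex if there is a matrix polynomial $P(x)\in\mathbb{R}[x]^{\ell\times n}$ (some $\ell$) with $\nabla^2 f(x)=P(x)^TP(x)$; $f$ is sos-concave if $-f$ is sos-convex. No assumption is made that $C$ or $H$ has nonempty interior. *)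

(* Defs.v *)
From HB Require Import structures.
From mathcomp Require Import all_boot all_order all_algebra.
From mathcomp Require Import reals.
From mathcomp Require Import mpoly.

Set Implicit Arguments.
Unset Strict Implicit.
Unset Printing Implicit Defensive.

Import Order.TTheory GRing.Theory Num.Theory.
Local Open Scope ring_scope.

Section Defs.
Variable R : realType.

(* degree of a polynomial (msize p = 1 + total degree, 0 for p = 0);
   the zero polynomial gets degree 0 *)
Definition mdegree (n : nat) (p : {mpoly R[n]}) : nat := (msize p).-1.

Definition hdeg (n : nat) (p : {mpoly R[n]}) : nat := uphalf (mdegree p).

Definition psd (N : nat) (M : 'M[R]_N) : Prop :=
  M^T = M /\ forall v : 'cV[R]_N, 0 <= (v^T *m M *m v) 0 0.

(* Localizing matrix L^{(k)}_f[y], rows/columns indexed by the monomials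
   x^beta with |beta| <= s, s = k - ceil(deg f / 2), i.e. by the finite
   type 'X_{1..n < s.+1}.  Entry (beta,gamma) = sum_delta f_delta y_{delta+beta+gamma},
   i.e. the coefficientwise replacement x^alpha |-> y_alpha in
   f(x) [x]_s [x]_s^T. *)
Definition loc_index (n k : nat) (f : {mpoly R[n]}) : finType :=
  'X_{1..n < (k - hdeg f).+1}.

Definition locmat (n k : nat) (f : {mpoly R[n]}) (y : 'X_{1..n} -> R) :
    'M[R]_#|{: loc_index k f}| :=
  \matrix_(i, j)
    \sum_(a <- msupp f)
       f@_a * y (a + (enum_val i : loc_index k f)
                   + (enum_val j : loc_index k f))%MM.

Definition sos_convex (n : nat) (f : {mpoly R[n]}) : Prop :=
  exists (l : nat) (P : 'M[{mpoly R[n]}]_(l, n)),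
    forall i j : 'I_n,
      mderiv i (mderiv j f) = \sum_(q < l) P q i * P q j.

Definition sos_concave (n : nat) (f : {mpoly R[n]}) : Prop :=
  sos_convex (- f).

Definition lin_subst (m n : nat) (A : 'M[R]_(m, n)) : m.-tuple {mpoly R[n]} :=
  [tuple \sum_(l < n) A i l *: 'X_l | i < m].

Definition comp_lin (m n : nat) (A : 'M[R]_(m, n)) (g : {mpoly R[m]}) : {mpoly R[n]} :=
  comp_mpoly (lin_subst A) g.

Definition Sk (n r t k : nat) (f : 'I_r -> {mpoly R[n]}) (h : 'I_t -> {mpoly R[n]})
    (x : 'I_n -> R) : Prop :=
  exists y : 'X_{1..n} -> R,
    [/\ y 0%MM = 1,
        forall i : 'I_n, x i = y U_(i)%MM,
        psd (locmat k (1 : {mpoly R[n]}) y),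
        forall i : 'I_r, psd (locmat k (f i) y)
      & forall j : 'I_t, psd (locmat k (h j) y)].

Definition semialg (n r : nat) (p : 'I_r -> {mpoly R[n]}) (x : 'I_n -> R) : Prop :=
  forall i : 'I_r, 0 <= (p i).@[x].

End Defs.

(* Main.v *)
Require Import Defs.
From HB Require Import structures.
From mathcomp Require Import all_boot all_order all_algebra.
From mathcomp Require Import reals.
From mathcomp Require Import mpoly.
From mathcomp Require Import polyrcf.
From mathcomp Require Import ssrcomplements.
From mathcomp Require Import ring lra zify.

Import Order.TTheory GRing.Theory Num.Theory.
Local Open Scope ring_scope.

Section Lfun.
Variable R : realType.
Variable n : nat.
Local Notation MP := {mpoly R[n]}.

Lemma msize_leP (p : MP) b :
  (forall m, m \in msupp p -> (mdeg m < b)%N) -> (msize p <= b)%N.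
Proof.
move=> H; rewrite msizeE big_seq; apply: (big_ind (fun z => z <= b)%N) => //.
by move=> u v hu hv; rewrite geq_max hu hv.
Qed.

Variable y : 'X_{1..n} -> R.

Definition Lf (p : MP) : R := \sum_(m <- msupp p) p@_m * y m.

Lemma LfE {p : MP} {k} : (msize p <= k)%N ->
  Lf p = \sum_(m : 'X_{1..n < k}) p@_m * y m.
Proof.
move=> le_pi; set I : subFinType _ := 'X_{1..n < k}.
rewrite /Lf (big_mksub I) ?msupp_uniq //=; first last.
  by move=> z /msize_mdeg_lt /leq_trans; apply.
rewrite big_rmcond //= => j /memN_msupp_eq0 ->.
by rewrite mul0r.
Qed.

Lemma Lf_is_additive : additive Lf.
Proof.
move=> p q; set k := maxn (msize p) (msize q).
have hp : (msize p <= k)%N by rewrite leq_maxl.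
have hq : (msize q <= k)%N by rewrite leq_maxr.
have hpq : (msize (p - q) <= k)%N.
  by apply: leq_trans (msizeD_le _ _) _; rewrite msizeN.
rewrite (LfE hp) (LfE hq) (LfE hpq) -sumrB; apply: eq_bigr => m _.
by rewrite mcoeffB mulrBl.
Qed.

HB.instance Definition _ := GRing.isAdditive.Build MP R Lf Lf_is_additive.

Lemma LfZ c (p : MP) : Lf (c *: p) = c * Lf p.
Proof.
have h : (msize (c *: p) <= msize p)%N by apply: msizeZ_le.
rewrite (LfE h) (LfE (leqnn _)) mulr_sumr; apply: eq_bigr => m _.
by rewrite mcoeffZ mulrA.
Qed.

Lemma LfCM c (p : MP) : Lf (c%:MP * p) = c * Lf p.
Proof. by rewrite mul_mpolyC LfZ. Qed.

Lemma LfMC c (p : MP) : Lf (p * c%:MP) = Lf p * c.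
Proof. by rewrite mulrC LfCM mulrC. Qed.

Lemma LfX m : Lf 'X_[m] = y m.
Proof. by rewrite /Lf msuppX big_seq1 mcoeffX eqxx mul1r. Qed.

Lemma LfC c : Lf c%:MP = c * y 0%MM.
Proof. by rewrite -[c%:MP]mulr1 LfCM -mpolyX0 LfX. Qed.

End Lfun.
Section Quad.
Variable R : realType.
Variable n : nat.
Local Notation MP := {mpoly R[n]}.
Variable y : 'X_{1..n} -> R.
Local Notation Lf := (@Lf R n y).
Lemma sum_enum {T : finType} (F : T -> R) :
  \sum_(i < #|{: T}|) F (enum_val i) = \sum_(t : T) F t.
Proof. by rewrite -big_enum_val. Qed.

Lemma quad_loc k (f : MP) (q : MP) : (msize q <= (k - hdeg f).+1)%N ->
  let v := \col_(i < #|{: loc_index k f}|) q@_(enum_val i : 'X_{1..n}) in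
  (v^T *m locmat k f y *m v) 0 0 = Lf (f * (q * q)).
Proof.
move=> hq v; rewrite !mxE; under eq_bigr do rewrite !mxE.
under eq_bigr do under eq_bigr do rewrite !mxE.
rewrite (sum_enum (fun c : loc_index k f =>
   (\sum_(j < #|{: loc_index k f}|) q@_(enum_val j : 'X_{1..n}) *
      (\sum_(a <- msupp f) f@_a * y (a + (enum_val j : 'X_{1..n}) + c)))
   * q@_c)).
under eq_bigr => c _ do rewrite (sum_enum (fun b : loc_index k f =>
   q@_b * (\sum_(a <- msupp f) f@_a * y (a + b + c)))).
have Eq := mpolywE hq.
transitivity (Lf ((\sum_(a <- msupp f) f@_a *: 'X_[a]) *
  ((\sum_(b : loc_index k f) q@_b *: 'X_[b]) *
   (\sum_(c : loc_index k f) q@_c *: 'X_[c])))); last by rewrite -Eq -mpolyE.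
rewrite mulr_suml raddf_sum /=.
under [RHS]eq_bigr => a _.
  rewrite mulr_suml mulr_sumr raddf_sum /=.
  under eq_bigr => b _.
    rewrite mulr_sumr mulr_sumr raddf_sum /=.
    under eq_bigr => c _ do
      rewrite -!scalerAl -!scalerAr !scalerA -!mpolyXD LfZ LfX.
    over.
  over.
rewrite exchange_big /=; apply: eq_bigr => c _.
rewrite mulr_suml exchange_big /=; apply: eq_bigr => b _.
rewrite mulr_sumr mulr_suml; apply: eq_bigr => a _.
by rewrite [(c + b)%MM]addmC addmA; ring.
Qed.

End Quad.
Section Deg.
Variable R : realType.
Variable n : nat.
Local Notation MP := {mpoly R[n]}.


Lemma msize_mderiv (p : MP) i : (msize (p^`M(i)) <= (msize p).-1)%N.
Proof.
apply: msize_leP => m; rewrite mcoeff_msupp mcoeff_deriv.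
have [->|nz] := eqVneq (p@_(m + U_(i))%MM) 0; first by rewrite mul0rn eqxx.
move=> _; have : (m + U_(i))%MM \in msupp p by rewrite mcoeff_msupp.
move/msize_mdeg_lt; rewrite mdegD mdeg1; lia.
Qed.

Lemma sos_size l (P : 'I_l -> MP) q0 :
  ((msize (P q0)).*2 <= (msize (\sum_q P q * P q)).+1)%N.
Proof.
have [->|nz0] := eqVneq (P q0) 0; first by rewrite msize0.
have [q1 nz1 Hmax] := @arg_maxP _ _ _ q0 (fun q => P q != 0)
   (fun q => mlead (P q)) nz0.
set M := mlead (P q1).
have coefE : (\sum_q P q * P q)@_(M + M)%MM =
   \sum_(q | (P q != 0) && (mlead (P q) == M)) mleadc (P q) ^+ 2.
  rewrite raddf_sum /= [RHS]big_mkcond /=; apply: eq_bigr => q _.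
  have [->|nzq] := eqVneq (P q) 0; first by rewrite mul0r raddf0.
  rewrite /=.
  case: eqP => [<-|neM] /=; first by rewrite mleadcM expr2.
  apply: mcoeff_gt_mlead.
  have lt : (mlead (P q) < M)%O by rewrite lt_neqAle; apply/andP; split;
     [apply/eqP | exact: Hmax].
  apply: (le_lt_trans (mleadM_le _ _)).
  apply: (lt_trans (y := (M + mlead (P q))%MM)); first by rewrite ltmc_add2l.
  by rewrite ltmc_add2r.
have pos : 0 < (\sum_q P q * P q)@_(M + M)%MM.
  rewrite coefE (bigD1 q1) /=; last by rewrite nz1 eqxx.
  apply: (lt_le_trans (y := mleadc (P q1) ^+ 2)).
    by rewrite lt_def sqrf_eq0 mleadc_eq0 nz1 sqr_ge0.
  by rewrite lerDl; apply: sumr_ge0 => q _; apply: sqr_ge0.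
have : (M + M)%MM \in msupp (\sum_q P q * P q).
  by rewrite mcoeff_msupp gt_eqF.
move/msize_mdeg_lt; rewrite mdegD.
have : (mdeg (mlead (P q0)) <= mdeg M)%N by apply: lemc_mdeg; exact: Hmax.
rewrite -(mlead_deg nz0); lia.
Qed.
End Deg.
Section Deg2.
Variable R : realType.
Variable n : nat.
Local Notation MP := {mpoly R[n]}.

Lemma msizeM_le2 (p q : MP) : (msize (p * q) <= (msize p + msize q).-1)%N.
Proof.
have [->|nzp] := eqVneq p 0; first by rewrite mul0r msize0.
have [->|nzq] := eqVneq q 0; first by rewrite mulr0 msize0.
by rewrite msizeM.
Qed.

Lemma msize_prod_le (I : Type) (r : seq I) (F : I -> MP) :
  (msize (\prod_(i <- r) F i) <= (\sum_(i <- r) (msize (F i)).-1).+1)%N.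
Proof.
elim: r => [|a r IH]; first by rewrite !big_nil msize1.
rewrite !big_cons; apply: leq_trans (msizeM_le2 _ _) _; lia.
Qed.

Lemma msize_exp_le {p : MP} e : (msize p <= 2)%N -> (msize (p ^+ e) <= e.+1)%N.
Proof.
move=> hp; elim: e => [|e IH]; first by rewrite expr0 msize1.
rewrite exprS; apply: leq_trans (msizeM_le2 _ _) _; lia.
Qed.

Lemma msize_mmap1 (w : 'I_n -> MP) m : (forall i, msize (w i) <= 2)%N ->
  (msize (mmap1 w m) <= (mdeg m).+1)%N.
Proof.
move=> hw; rewrite /mmap1; apply: leq_trans (msize_prod_le _ _ _) _.
rewrite ltnS mdegE; apply: leq_sum => i _.
have h := msize_exp_le (m i) (hw i); move: h; case: (msize _) => //.
Qed.

Lemma msize_mmap_lin (w : 'I_n -> MP) (P : MP) : (forall i, msize (w i) <= 2)%N ->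
  (msize (mmap (@mpolyC n R) w P) <= msize P)%N.
Proof.
move=> hw; rewrite /mmap; apply: leq_trans (msize_sum _ _ _) _.
rewrite big_seq; apply: (big_ind (fun z => z <= msize P)%N) => //.
  by move=> u v hu hv; rewrite geq_max hu hv.
move=> m hm; rewrite mul_mpolyC; apply: leq_trans (msizeZ_le _ _) _.
apply: leq_trans (msize_mmap1 w m hw) _.
exact: msize_mdeg_lt.
Qed.
End Deg2.
Section PhiS.
Variable R : realType.
Variable n : nat.
Local Notation MP := {mpoly R[n]}.
Local Notation S := {poly MP}.
Definition FF : {rmorphism R -> S} := polyC \o @mpolyC n R.
Variable t : 'I_n -> S.
Definition Phi (p : MP) : S := mmap FF t p.

Lemma PhiD p q : Phi (p + q) = Phi p + Phi q.
Proof. exact: mmapD. Qed.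
Lemma PhiM p q : Phi (p * q) = Phi p * Phi q.
Proof. exact: (rmorphM (mmap FF t)). Qed.
Lemma PhiC c : Phi c%:MP = (c%:MP)%:P.
Proof. exact: mmapC. Qed.
Lemma PhiX i : Phi 'X_i = t i.
Proof. by rewrite /Phi mmapX mmap1U. Qed.
End PhiS.
Section S2.
Variable R : realType.
Variable n : nat.
Local Notation MP := {mpoly R[n]}.
Local Notation S := {poly MP}.
Variable t : 'I_n -> S.
Variable Ph : MP -> S.
Hypothesis PhD : forall p q, Ph (p + q) = Ph p + Ph q.
Hypothesis PhM : forall p q, Ph (p * q) = Ph p * Ph q.
Hypothesis PhC : forall c, Ph c%:MP = (c%:MP)%:P.
Hypothesis PhX : forall i, Ph 'X_i = t i.

Lemma Ph0 : Ph 0 = 0.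
Proof. by apply/esym/(addrI (Ph 0)); rewrite -PhD !addr0. Qed.

Definition chainQ (p : MP) :=
  (Ph p)^`() = \sum_i Ph (p^`M(i)) * (t i)^`().

Lemma chainQD p q : chainQ p -> chainQ q -> chainQ (p + q).
Proof.
rewrite /chainQ => hp hq; rewrite PhD derivD hp hq -big_split /=.
by apply: eq_bigr => i _; rewrite mderivD PhD mulrDl.
Qed.

Lemma chainQM p q : chainQ p -> chainQ q -> chainQ (p * q).
Proof.
rewrite /chainQ => hp hq; rewrite PhM derivM hp hq mulr_suml mulr_sumr.
rewrite -big_split /=; apply: eq_bigr => i _.
by rewrite mderivM PhD !PhM; ring.
Qed.

Lemma chainQC c : chainQ c%:MP.
Proof.
rewrite /chainQ PhC derivC big1 // => i _.
by rewrite mderivC -(mpolyC0 n R) PhC mul0r.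
Qed.

Lemma mderivXi (i j : 'I_n) : ('X_i : MP)^`M(j) = (i == j)%:R.
Proof.
rewrite mderivX mnm1E; case: eqP => [<-|_]; last by rewrite scale0r.
have -> : (U_(i) - U_(i))%MM = 0%MM by apply/mnmP => l; rewrite mnmBE subnn mnm0E.
by rewrite mpolyX0 scale1r.
Qed.

Lemma chainQX i : chainQ 'X_i.
Proof.
rewrite /chainQ PhX (bigD1 i) //= big1 ?addr0.
  by rewrite mderivXi eqxx /= -(mpolyC1 n R) PhC mul1r.
by move=> j /negbTE nij; rewrite mderivXi eq_sym nij /= Ph0 mul0r.
Qed.

Lemma chain_rule p : chainQ p.
Proof.
elim/mpolyind: p => [|c m p _ _ IH].
  by rewrite -(mpolyC0 n R); apply: chainQC.
apply: chainQD => //; rewrite -mul_mpolyC; apply: chainQM; first exact: chainQC.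
rewrite mpolyXE_id; apply: (big_ind chainQ).
- by rewrite -(mpolyC1 n R); apply: chainQC.
- exact: chainQM.
move=> i _; elim: (m i) => [|e IHe]; first by rewrite expr0 -(mpolyC1 n R); apply: chainQC.
by rewrite exprS; apply: chainQM => //; apply: chainQX.
Qed.
End S2.

Lemma mmap_rmorph (n : nat) (R : nzRingType) (S S' : comNzRingType) (f : R -> S)
    (rho : {rmorphism S -> S'}) (h : 'I_n -> S) (p : {mpoly R[n]}) :
  rho (mmap f h p) = mmap (rho \o f) (rho \o h) p.
Proof.
rewrite /mmap rmorph_sum; apply: eq_bigr => m _; rewrite rmorphM /mmap1 rmorph_prod.
by congr (_ * _); apply: eq_bigr => i _; rewrite rmorphXn.
Qed.

Lemma mmap_eq (n : nat) (R : nzRingType) (S : nzRingType) (f1 f2 : R -> S)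
    (h1 h2 : 'I_n -> S) (p : {mpoly R[n]}) :
  f1 =1 f2 -> h1 =1 h2 -> mmap f1 h1 p = mmap f2 h2 p.
Proof.
move=> ef eh; rewrite /mmap; apply: eq_bigr => m _; rewrite ef /mmap1.
by congr (_ * _); apply: eq_bigr => i _; rewrite eh.
Qed.


Lemma conv01 (R : realType) (T : {poly R}) :
  (forall s, 0 <= T^`()^`().[s]) -> T.[0] + T^`().[0] <= T.[1].
Proof.
move=> h2; have [c hc E] := poly_mvt T (@ltr01 R).
rewrite subr0 mulr1 in E.
move: hc; rewrite in_itv /= => /andP[hc0 hc1].
have c01 : c \in `[0, 1] by rewrite in_itv /= !ltW.
have := @ler_hornerW R 0 1 T^`() (fun z _ => h2 z) 0 c.
have i0 : (0:R) \in `[0, 1] by rewrite in_itv /= lexx ler01.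
move=> /(_ i0 c01).
move=> /(_ (ltW hc0)) hle.
have -> : T.[1] = T.[0] + T^`().[c] by rewrite -E; ring.
by rewrite lerD2l.
Qed.

Lemma sq_expand (T : comNzRingType) (n l : nat) (A : 'I_l -> 'I_n -> T) (d : 'I_n -> T) :
  \sum_(j < n) (\sum_(i < n) (\sum_(q < l) A q i * A q j) * d i) * d j =
  \sum_(q < l) (\sum_(i < n) A q i * d i) * (\sum_(i < n) A q i * d i).
Proof.
under [RHS]eq_bigr => q _ do rewrite mulr_suml.
under [RHS]eq_bigr => q _ do under eq_bigr => i _ do rewrite mulr_sumr.
rewrite [LHS](eq_bigr (fun j => \sum_(i < n) \sum_(q < l) A q i * A q j * d i * d j)); last first.
  move=> j _; rewrite mulr_suml; apply: eq_bigr => i _; rewrite !mulr_suml; apply: eq_bigr => q _; by [].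
rewrite exchange_big /=.
under eq_bigr => i _ do rewrite exchange_big /=.
rewrite exchange_big /=.
apply: eq_bigr => q _; apply: eq_bigr => i _; apply: eq_bigr => j _.
ring.
Qed.

Section Jensen.
Variable R : realType.
Variable n : nat.
Local Notation MP := {mpoly R[n]}.
Local Notation S := {poly MP}.
Variable y : 'X_{1..n} -> R.
Local Notation Lf := (@Lf R n y).
Definition xy (i : 'I_n) : R := y U_(i)%MM.
Definition dlt (i : 'I_n) : MP := 'X_i - (xy i)%:MP.
Definition tt (i : 'I_n) : S := ((xy i)%:MP)%:P + (dlt i)%:P * 'X.

Lemma tt_deriv i : (tt i)^`() = (dlt i)%:P.
Proof. by rewrite /tt derivD derivC add0r deriv_mulC derivX mulr1. Qed.

Lemma tt_horner i c : (tt i).[c] = (xy i)%:MP + dlt i * c.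
Proof. by rewrite /tt hornerD hornerC hornerM hornerC hornerX. Qed.

Lemma map_deriv (Q : S) : map_poly Lf Q^`() = (map_poly Lf Q)^`().
Proof.
by apply/polyP => j; rewrite coef_deriv !coef_map coef_deriv raddfMn.
Qed.

Lemma LfH (Q : S) s : (map_poly Lf Q).[s] = Lf (Q.[s%:MP]).
Proof.
have hs : (size (map_poly Lf Q) <= size Q)%N by rewrite /map_poly; apply: size_poly.
rewrite (horner_coef_wide _ hs) horner_coef raddf_sum /=.
apply: eq_bigr => i _; rewrite coef_map /= -rmorphXn /=.
by rewrite LfMC.
Qed.

Lemma Lf_dlt i : y 0%MM = 1 -> Lf (dlt i) = 0.
Proof. by move=> y0; rewrite /dlt raddfB /= LfX LfC y0 mulr1 /xy subrr. Qed.

Lemma msize_dlt i : (msize (dlt i) <= 2)%N.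
Proof.
rewrite /dlt; apply: leq_trans (msizeD_le _ _) _; rewrite msizeN msizeX mdeg1 msizeC.
by rewrite geq_max leqnn; case: (_ != 0).
Qed.

Lemma msize_tt i s : (msize (tt i).[s%:MP] <= 2)%N.
Proof.
rewrite tt_horner; apply: leq_trans (msizeD_le _ _) _; rewrite msizeC geq_max.
apply/andP; split; first by case: (_ != 0).
apply: leq_trans (msizeM_le2 _ _ _ _) _; rewrite msizeC.
have := msize_dlt i; case: (s != 0) => /=; lia.
Qed.

Variable Ph : MP -> S.
Hypothesis PhD : forall p q, Ph (p + q) = Ph p + Ph q.
Hypothesis PhM : forall p q, Ph (p * q) = Ph p * Ph q.
Hypothesis PhC : forall c, Ph c%:MP = (c%:MP)%:P.
Hypothesis PhX : forall i, Ph 'X_i = tt i.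
Hypothesis Phh : forall c p, (Ph p).[c] = mmap (@mpolyC n R) (fun i => (tt i).[c]) p.
Hypothesis y0 : y 0%MM = 1.
Variable k : nat.
Hypothesis mom : forall q : MP, (msize q <= k.+1)%N -> 0 <= Lf (q * q).

Lemma Ph0' : Ph 0 = 0.
Proof. by apply/esym/(addrI (Ph 0)); rewrite -PhD !addr0. Qed.

Lemma Ph_sum (I : Type) (r : seq I) (F : I -> MP) :
  Ph (\sum_(i <- r) F i) = \sum_(i <- r) Ph (F i).
Proof. exact: (big_morph Ph PhD Ph0'). Qed.

Lemma Ph_at0 p : (Ph p).[0%:MP] = (p.@[xy])%:MP.
Proof.
rewrite Phh /meval (@mmap_rmorph n R R MP idfun (mpolyC n (R:=R))).
by apply: mmap_eq => // i; rewrite /= tt_horner mulr0 addr0.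
Qed.

Lemma Ph_at1 p : (Ph p).[1%:MP] = p.
Proof.
rewrite Phh -[RHS](comp_mpoly_id p) /comp_mpoly.
apply: mmap_eq => // i; rewrite tt_horner tnth_mktuple mpolyC1 mulr1 /dlt.
by rewrite addrC subrK.
Qed.

Lemma jensen (g : MP) (l : nat) (P : 'M[MP]_(l, n)) :
  (msize g <= k.*2.+1)%N ->
  (forall i j : 'I_n, mderiv i (mderiv j g) = \sum_(q < l) P q i * P q j) ->
  g.@[xy] <= Lf g.
Proof.
move=> hg hP.
have ch := @chain_rule R n tt Ph PhD PhM PhC PhX.
have d1 : (Ph g)^`() = \sum_j Ph (g^`M(j)) * (dlt j)%:P.
  by rewrite ch; apply: eq_bigr => j _; rewrite tt_deriv.
have d2 : (Ph g)^`()^`() =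
    \sum_j (\sum_i Ph ((g^`M(j))^`M(i)) * (dlt i)%:P) * (dlt j)%:P.
  rewrite d1 raddf_sum /=; apply: eq_bigr => j _.
  rewrite derivM derivC mulr0 addr0 ch; congr (_ * _).
  by apply: eq_bigr => i _; rewrite tt_deriv.
have hPdeg : forall q i, (msize (P q i) <= k)%N.
  move=> q i; have := @sos_size R n l (fun q => P q i) q; rewrite /= -hP.
  have h1 := @msize_mderiv R n (g^`M(i)) i.
  have h2 := @msize_mderiv R n g i.
  lia.
set T := map_poly Lf (Ph g).
have K1 : T.[1] = Lf g by rewrite LfH Ph_at1.
have K0 : T.[0] = g.@[xy] by rewrite LfH Ph_at0 LfC y0 mulr1.
have K0' : T^`().[0] = 0.
  rewrite -map_deriv LfH d1 horner_sum raddf_sum /= big1 // => j _.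
  by rewrite hornerM hornerC Ph_at0 LfCM Lf_dlt // mulr0.
have K2 : forall s, 0 <= T^`()^`().[s].
  move=> s; rewrite -!map_deriv LfH d2.
  set c := s%:MP.
  set a := fun q i => (Ph (P q i)).[c].
  have -> : (\sum_j (\sum_i Ph ((g^`M(j))^`M(i)) * (dlt i)%:P) * (dlt j)%:P).[c]
      = \sum_q (\sum_i a q i * dlt i) * (\sum_i a q i * dlt i).
    rewrite horner_sum.
    under eq_bigr => j _.
      rewrite hornerM hornerC horner_sum.
      under eq_bigr => i _.
        rewrite hornerM hornerC hP Ph_sum horner_sum.
        under eq_bigr => q _ do rewrite PhM hornerM.
        over.
      over.
    rewrite /=.
    by rewrite /a sq_expand.
  rewrite raddf_sum /=; apply: sumr_ge0 => q _; apply: mom.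
  apply: leq_trans (msize_sum _ _ _) _.
  rewrite big_seq; apply: (big_ind (fun z => z <= k.+1)%N) => //.
    by move=> u v hu hv; rewrite geq_max hu hv.
  move=> i _; apply: leq_trans (msizeM_le2 _ _ _ _) _.
  have ha : (msize (a q i) <= k)%N.
    rewrite /a Phh; apply: leq_trans (hPdeg q i).
    by apply: msize_mmap_lin => j; apply: msize_tt.
  have := msize_dlt i; lia.
by have := @conv01 R T K2; rewrite K0 K0' K1 addr0.
Qed.
End Jensen.


Lemma Phih (R : realType) (n : nat) (t : 'I_n -> {poly {mpoly R[n]}}) c p :
  (Phi R n t p).[c] = mmap (@mpolyC n R) (fun i => (t i).[c]) p.
Proof.
rewrite /Phi.
rewrite -[_.[c]]/(horner_eval c (mmap (FF R n) t p)).
rewrite (@mmap_rmorph n R _ _ (FF R n) (horner_eval c)).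
by apply: mmap_eq => // r; rewrite /= /horner_eval hornerC.
Qed.

Lemma jensen_main (R : realType) (n : nat) (y : 'X_{1..n} -> R) (k : nat)
   (g : {mpoly R[n]}) (l : nat) (P : 'M[{mpoly R[n]}]_(l, n)) :
  y 0%MM = 1 ->
  (forall q : {mpoly R[n]}, (msize q <= k.+1)%N -> 0 <= Lf R n y (q * q)) ->
  (msize g <= k.*2.+1)%N ->
  (forall i j : 'I_n, mderiv i (mderiv j g) = \sum_(q < l) P q i * P q j) ->
  g.@[xy R n y] <= Lf R n y g.
Proof.
move=> y0 mom hg hP.
pose t := tt R n y.
exact: (@jensen R n y (Phi R n t) (PhiD R n t) (PhiM R n t) (PhiC R n t)
   (PhiX R n t) (@Phih R n t) y0 k mom g l P hg hP).
Qed.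


Lemma psd_loc (R : realType) (n : nat) (y : 'X_{1..n} -> R) k (f : {mpoly R[n]}) :
  psd (locmat k f y) -> forall q, (msize q <= (k - hdeg f).+1)%N ->
  0 <= Lf R n y (f * (q * q)).
Proof.
move=> [_ H] q hq; have E := @quad_loc R n y k f q hq; cbv zeta in E.
by rewrite -E; apply: H.
Qed.

Lemma quad_expand (T : comNzRingType) (N : nat) (F : T) (u v : 'I_N -> T) :
  \sum_(i < N) (\sum_(j < N) v j * (F * u j * u i)) * v i =
  F * ((\sum_(j < N) v j * u j) * (\sum_(j < N) v j * u j)).
Proof.
rewrite [LHS](eq_bigr (fun i => \sum_(j < N) v j * (F * u j * u i) * v i));
  last by move=> i _; rewrite mulr_suml.
rewrite [RHS](_ : _ = \sum_(j < N) \sum_(i < N) F * (v j * u j * (v i * u i))); last first.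
  rewrite mulr_suml mulr_sumr; apply: eq_bigr => j _.
  by rewrite mulr_sumr mulr_sumr.
rewrite exchange_big /=; apply: eq_bigr => j _; apply: eq_bigr => i _.
ring.
Qed.

Lemma dirac_psd (R : realType) (n : nat) k (f : {mpoly R[n]}) (x : 'I_n -> R) :
  0 <= f.@[x] -> psd (locmat k f (mmap1 x)).
Proof.
move=> hf.
have M3 : forall a b c : 'X_{1..n},
    mmap1 x (a + b + c)%MM = mmap1 x a * mmap1 x b * mmap1 x c.
  by move=> a b c; rewrite !commr_mmap1_M // => i z; apply: mulrC.
have E : forall i j, locmat k f (mmap1 x) i j =
    f.@[x] * mmap1 x (enum_val i : 'X_{1..n}) * mmap1 x (enum_val j : 'X_{1..n}).
  move=> i j; rewrite mxE mevalE mulr_suml mulr_suml; apply: eq_bigr => a _.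
  by rewrite M3 /mmap1; ring.
split.
  apply/matrixP => i j.
  have -> : (locmat k f (mmap1 x))^T i j = locmat k f (mmap1 x) j i by rewrite mxE.
  rewrite (E j i) (E i j); ring.
move=> v; set M := locmat k f (mmap1 x) in E *.
rewrite !mxE; under eq_bigr do rewrite !mxE.
under eq_bigr => i _ do under eq_bigr => j _ do rewrite (E j i) mxE.
rewrite (@quad_expand R _ (f.@[x]) (fun i : 'I_#|{: loc_index k f}| => mmap1 x (enum_val i : 'X_{1..n})) (fun j => v j 0)).
by apply: mulr_ge0 => //; rewrite -expr2 sqr_ge0.
Qed.

Lemma hdeg_size (R : realType) (n : nat) (p : {mpoly R[n]}) k :
  (hdeg p <= k)%N -> (msize p <= k.*2.+1)%N.
Proof.
rewrite /hdeg /mdegree uphalf_half => h.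
have := odd_double_half (msize p).-1.
move: h; case: (odd _) => /= h E; lia.
Qed.


Lemma pos_of_loc (R : realType) (n : nat) (y : 'X_{1..n} -> R) (k : nat)
   (p : {mpoly R[n]}) :
  y 0%MM = 1 ->
  (forall q : {mpoly R[n]}, (msize q <= k.+1)%N -> 0 <= Lf R n y (q * q)) ->
  psd (locmat k p y) -> (hdeg p <= k)%N -> sos_concave p ->
  0 <= p.@[xy R n y].
Proof.
move=> y0 mom hM hd [l [P hP]].
have h1 : 0 <= Lf R n y p.
  have := @psd_loc R n y k p hM 1; rewrite msize1 !mulr1; apply.
  by [].
have := @jensen_main R n y k (- p) l P y0 mom; rewrite msizeN => /(_ (@hdeg_size R n p k hd) hP).
rewrite mevalN raddfN /= lerN2 => h2.
exact: le_trans h1 h2.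
Qed.

Theorem theorem2p7 (R : realType) (n m r t : nat)
    (f : 'I_r -> {mpoly R[n]}) (g : 'I_t -> {mpoly R[m]}) (A : 'M[R]_(m, n)) :
  let h := fun j : 'I_t => comp_lin A (g j) in
  let d := maxn (\max_(i < r) hdeg (f i)) (\max_(j < t) hdeg (h j)) in
  (forall i : 'I_r, sos_concave (f i)) ->
  (forall j : 'I_t, sos_concave (h j)) ->
  forall k : nat, (d <= k)%N ->
    forall x : 'I_n -> R, Sk k f h x <-> (semialg f x /\ semialg h x).
Proof.
move=> h d hf hh k hk x; split.
  case=> yy [y0 hx hM hF hH].
  have mom : forall q : {mpoly R[n]}, (msize q <= k.+1)%N -> 0 <= Lf R n yy (q * q).
    move=> q hq; have := @psd_loc R n yy k 1 hM q.
    rewrite mul1r; apply; move: hq; rewrite /hdeg /mdegree msize1 /= subn0.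
    by [].
  have ex : x =1 xy R n yy by move=> i; rewrite hx.
  split => i; rewrite (meval_eq _ ex).
  - apply: (@pos_of_loc R n yy k _ y0 mom (hF i) _ (hf i)).
    apply: leq_trans hk; apply: leq_trans (leq_maxl _ _).
    exact: leq_bigmax.
  - apply: (@pos_of_loc R n yy k (h i) y0 mom (hH i) _ (hh i)).
    apply: leq_trans hk; apply: leq_trans (leq_maxr _ _).
    exact: leq_bigmax.
case=> hsf hsh; exists (mmap1 x); split.
- exact: mmap11.
- by move=> i; rewrite mmap1U.
- by apply: dirac_psd; rewrite meval1.
- by move=> i; apply: dirac_psd.
- by move=> j; apply: dirac_psd.
Qed.
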